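(* Assume $X_t>0$ for all $t\in\mathcal T$ and let $\alpha=\sum_tY_t/X_t$. Let $\delta_{\mathcal X}\in[0,1]$ and let $\hat F_{\mathcal X}\in\mathbb F(\boldsymbol X)$ be any strategy whose $c$-marginals satisfy, for all $c\in\mathcal C$ and $\boldsymbol u\in\mathbb R^T_{\ge0}$, $$\hat F_{\mathcal X,c}(\boldsymbol u)=1-\delta_{\mathcal X}+\delta_{\mathcal X}\min_{t\in\mathcal T}\min\Big\{\frac{\delta_{\mathcal X}}{2v_cX_t}u_t,1\Big\}.$$ Then in the weakest-link game, for every $F_{\mathcal Y}\in\mathbb F(\boldsymbol Y)$, $$\pi_{\mathcal X}(\hat F_{\mathcal X},F_{\mathcal Y})\ge\delta_{\mathcal X}\Big(1-\frac{\delta_{\mathcal X}}{2}\alpha\Big).$$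
   Context: Contests $\mathcal C=\{1,\dots,C\}$ with values $v_c>0$, $\sum_cv_c=1$; types $\mathcal T=\{1,\dots,T\}$; $\boldsymbol Y\in\mathbb R^T_{\ge0}$. $\mathbb F(\boldsymbol X)$ is the set of probability distributions $F$ on $\mathbb R^{CT}_{\ge0}$ (points $\mathbf x=(\boldsymbol x_c)_c$, $\boldsymbol x_c=(x_{c,t})_t$) with $\mathbb E_{\mathbf x\sim F}[\sum_cx_{c,t}]\le X_t$ for all $t$; similarly $\mathbb F(\boldsymbol Y)$. $c$-marginal: $F_c(\boldsymbol u)=\mathbb P_{\mathbf x\sim F}[x_{c,t}\le u_t\ \forall t]$. Weakest-link rule $W_{\mathrm{WL}}(\boldsymbol x,\boldsymbol y)=\mathbf 1\{x_t\ge y_t\ \forall t\}$; $\pi_{\mathcal X}(F_{\mathcal X},F_{\mathcal Y})=\mathbb E[\sum_cv_cW_{\mathrm{WL}}(\boldsymbol x_c,\boldsymbol y_c)]$ with independent $\mathbf x\sim F_{\mathcal X}$, $\mathbf y\sim F_{\mathcal Y}$. (A strategy with the displayed marginals: in contest $c$, with probability $1-\delta_{\mathcal X}$ allocate nothing; otherwise draw $U\sim\mathrm{Unif}[0,1]$ and allocate $x_{c,t}=\frac{2v_cX_t}{\delta_{\mathcal X}}U$ of every type $t$.) *)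

(* Defs.v *)
From HB Require Import structures.
From mathcomp Require Import all_boot all_order all_algebra.
From mathcomp Require Import all_classical all_reals all_analysis.
Set Implicit Arguments. Unset Strict Implicit. Unset Printing Implicit Defensive.
Import Order.TTheory GRing.Theory Num.Theory.
Local Open Scope classical_set_scope.
Local Open Scope ring_scope.

(* A point of R^{C T} is an nC-tuple (contests) of nT-tuples (types) of reals;
   tuples carry the product sigma-algebra of mathcomp-analysis. *)
Definition alloc (R : realType) (nC nT : nat) := nC.-tuple (nT.-tuple R).

Definition xct (R : realType) nC nT (x : alloc R nC nT) (c : 'I_nC) (t : 'I_nT) : R :=
  tnth (tnth x c) t.

Definition in_FF (R : realType) nC nT (X : 'I_nT -> R)
    (P : probability (alloc R nC nT) R) : Prop :=
  {ae P, forall x : alloc R nC nT, forall c t, 0 <= xct x c t} /\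
  forall t : 'I_nT,
    (\int[P]_(x in setT) (\sum_(c < nC) xct x c t)%:E <= (X t)%:E)%E.

Definition marginal (R : realType) nC nT (P : probability (alloc R nC nT) R)
    (c : 'I_nC) (u : 'I_nT -> R) : \bar R :=
  P [set x : alloc R nC nT | forall t, xct x c t <= u t].

Definition W_WL (R : realType) nT (x y : nT.-tuple R) : R :=
  if [forall t, tnth y t <= tnth x t] then 1 else 0.

Definition piX (R : realType) nC nT (v : 'I_nC -> R)
    (FX FY : probability (alloc R nC nT) R) : \bar R :=
  (\int[FX \x FY]_(z in setT)
     (\sum_(c < nC) v c * W_WL (tnth z.1 c) (tnth z.2 c))%:E)%E.

(* Main.v *)
Set Warnings "-all".
Require Import Defs.
From HB Require Import structures.
From mathcomp Require Import all_boot all_order all_algebra.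
From mathcomp Require Import all_classical all_reals all_analysis.
From mathcomp Require Import measurable_realfun ring lra.
Set Implicit Arguments. Unset Strict Implicit.
Import Order.TTheory GRing.Theory Num.Theory.
Local Open Scope classical_set_scope.
Local Open Scope ring_scope.

Section H.
Context (R : realType).

Lemma mforall d (T : measurableType d) n (g h : 'I_n -> T -> R) :
  (forall t, measurable_fun setT (g t)) -> (forall t, measurable_fun setT (h t)) ->
  measurable_fun setT (fun z => [forall t, g t z <= h t z]).
Proof.
move=> mg mh.
have -> : (fun z => [forall t, g t z <= h t z]) =
   (fun z => all (fun t => g t z <= h t z) (enum 'I_n)).
  apply/funext => z; apply/idP/idP.
  - by move/forallP => H; apply/allP => t _; exact: H.
  - by move/allP => H; apply/forallP => t; apply: H; rewrite mem_enum.
elim: (enum 'I_n) => [|t s IH] /=; first exact: measurable_cst.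
by apply: measurable_and => //; exact: measurable_fun_ler.
Qed.

Lemma mset_forall d (T : measurableType d) n (g h : 'I_n -> T -> R) :
  (forall t, measurable_fun setT (g t)) -> (forall t, measurable_fun setT (h t)) ->
  measurable [set z | forall t, g t z <= h t z].
Proof.
move=> mg mh.
have mt : measurable [set true] by [].
have := mforall mg mh measurableT mt.
rewrite setTI; congr measurable; apply/seteqP; split => z /=.
- by move=> H; apply/forallP.
- by move/forallP.
Qed.

Lemma mxct nC nT c t : measurable_fun setT (fun x : alloc R nC nT => xct x c t).
Proof.
rewrite /xct.
exact: (measurableT_comp (measurable_tnth t) (measurable_tnth c)).
Qed.


Lemma union_bound d (T : measurableType d) (P : probability T R) I (s : seq I)
  (F : I -> set T) : (forall i, measurable (F i)) ->
  (P (\big[setU/set0]_(i <- s) F i) <= \sum_(i <- s) P (F i))%E.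
Proof.
move=> mF; elim: s => [|i s IH]; first by rewrite !big_nil measure0.
rewrite !big_cons; apply: le_trans (measureU2 _ _ _) _ => //.
  exact: bigsetU_measurable.
exact: leeD.
Qed.

Lemma core nC nT (P : probability (alloc R nC nT) R) (v : 'I_nC -> R)
  (X : 'I_nT -> R) (del : R) (c : 'I_nC) :
  0 < del -> del <= 1 -> 0 < v c -> (forall t, 0 < X t) ->
  (forall (u : 'I_nT -> R), (forall t, 0 <= u t) ->
     marginal P c u =
     (1 - del + del *
        \big[Num.min/1]_(t < nT) Num.min (del / (2 * v c * X t) * u t) 1)%:E) ->
  forall u : 'I_nT -> R, (forall t, 0 <= u t) ->
  ((del - del * \sum_(t < nT) (del / (2 * v c * X t) * u t))%:E
     <= P [set x | forall t, (u t <= xct x c t)%R])%E.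
Proof.
move=> d0 d1 v0 X0 hm u u0.
have mg : forall t, measurable_fun setT (fun x : alloc R nC nT => xct x c t).
  by move=> t; exact: mxct.
have mc : forall (a : 'I_nT -> R) t, measurable_fun setT (fun _ : alloc R nC nT => a t).
  by move=> a t; exact: measurable_cst.
have [n0|nT0] := eqVneq nT 0%N.
  have -> : [set x | forall t, u t <= xct x c t] = setT.
    apply/seteqP; split => // x _ t; have := ltn_ord t; by rewrite {2}n0 ltn0.
  rewrite (@probability_setT _ _ _ P) lee_fin big1 ?mulr0 ?subr0 // => t.
  have := ltn_ord t; by rewrite {2}n0 ltn0.
have t0 : 'I_nT by exists 0%N; rewrite lt0n.
pose w s := 2 * v c * X s / del.
have w0 : forall s, 0 <= w s.
  by move=> s; rewrite /w divr_ge0 ?mulr_ge0 ?ltW.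
pose A := [set x : alloc R nC nT | forall t, u t <= xct x c t].
pose box := [set x : alloc R nC nT | forall s, xct x c s <= w s].
pose Z := [set x : alloc R nC nT | forall s, xct x c s <= (fun _ => 0) s].
pose ut t s := if s == t then u t else w s.
pose B t := [set x : alloc R nC nT | forall s, xct x c s <= ut t s].
have mA : measurable A by apply: mset_forall.
have mbox : measurable box by apply: mset_forall.
have mZ : measurable Z by apply: mset_forall.
have mB : forall t, measurable (B t) by move=> t; apply: mset_forall.
have Pbox : P box = 1%:E.
  rewrite /box -/(marginal P c w) hm //.
  rewrite bigmin_eq_id ?mulr1 ?subrK // => s _.
  have -> : del / (2 * v c * X s) * w s = 1.
    rewrite /w; field.
    by rewrite ?mulf_neq0 ?gt_eqF ?X0 ?v0 ?d0 ?andbT //.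
  by rewrite minxx.
have PZ : P Z = (1 - del)%:E.
  rewrite /Z -/(marginal P c (fun _ => 0)) hm //.
  suff -> : \big[Num.min/1]_(t < nT) Num.min (del / (2 * v c * X t) * 0) 1 = 0.
    by rewrite mulr0 addr0.
  apply/le_anti/andP; split.
    apply: le_trans (bigmin_le _ t0 _) _.
    by rewrite mulr0 ge_min lexx.
  by apply: le_bigmin => // t _; rewrite mulr0 le_min lexx ler01.
pose m t := \big[Num.min/1]_(s < nT) Num.min (del / (2 * v c * X s) * ut t s) 1.
have PB : forall t, P (B t) = (1 - del + del * m t)%:E.
  move=> t; rewrite /B -/(marginal P c (ut t)) hm // => s.
  by rewrite /ut; case: ifP.
have mle : forall t, m t <= del / (2 * v c * X t) * u t.
  move=> t; apply: le_trans (bigmin_le _ t _) _.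
  by rewrite /ut eqxx ge_min lexx.
have ZB : forall t, Z `<=` B t.
  move=> t x /= H s; apply: le_trans (H s) _; rewrite /ut; case: ifP => _ //.
have cover : box `<=` A `|` Z `|` \big[setU/set0]_(t <- enum 'I_nT) (B t `\` Z).
  move=> x /= Hx.
  case: (pselect (A x)) => HA; first by left; left.
  case: (pselect (Z x)) => HZ; first by left; right.
  right; have [t Ht] : exists t, xct x c t < u t.
    move/existsNP: HA => [t /negP Ht]; exists t; by rewrite ltNge.
  rewrite -bigcup_seq; exists t; first by rewrite /= mem_enum.
  split => //= s; rewrite /ut; case: eqP => [->|_]; [exact: ltW | exact: Hx].
have mU : measurable (\big[setU/set0]_(t <- enum 'I_nT) (B t `\` Z)).
  by apply: bigsetU_measurable => t _; exact: measurableD.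
have H1 : (P box <= P A + P Z + \sum_(t <- enum 'I_nT) P (B t `\` Z))%E.
  apply: le_trans (le_measure _ _ _ cover) _; rewrite ?inE //.
  - by apply: measurableU => //; exact: measurableU.
  apply: le_trans (measureU2 _ _ _) _ => //; first exact: measurableU.
  apply: leeD; first exact: measureU2.
  by apply: union_bound => t; exact: measurableD.
have PD : forall t, P (B t `\` Z) = (del * m t)%:E.
  move=> t; rewrite measureD // ?(setIidr (ZB t)).
    apply: (@eq_trans _ _ ((1 - del + del * m t)%:E - (1-del)%:E)%E).
      by congr (_ - _)%E; [exact: PB|exact: PZ].
    by rewrite -EFinB; congr EFin; ring.
  by have /fin_numPlt/andP[] := fin_num_measure P (B t) (mB t).
move: H1; rewrite Pbox PZ.
under eq_bigr do rewrite PD.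
rewrite sumEFin -(fineK (fin_num_measure P A mA)) -!EFinD !lee_fin => H1.
have S : \sum_(t <- enum 'I_nT) del * m t <=
         del * \sum_(t < nT) (del / (2 * v c * X t) * u t).
  rewrite -big_enum /= mulr_sumr; apply: ler_sum => t _.
  by apply: ler_wpM2l; [exact: ltW | exact: mle].
lra.
Qed.


Lemma mW d (T : measurableType d) nC nT (g h : T -> alloc R nC nT) c :
  measurable_fun setT g -> measurable_fun setT h ->
  measurable_fun setT (fun z => W_WL (tnth (g z) c) (tnth (h z) c)).
Proof.
move=> mg mh; rewrite /W_WL.
apply: measurable_fun_ifT; [|exact: measurable_cst|exact: measurable_cst].
apply: (@mforall _ _ _ (fun t z => xct (h z) c t) (fun t z => xct (g z) c t)).
- by move=> t; exact: (measurableT_comp (mxct c t) mh).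
- by move=> t; exact: (measurableT_comp (mxct c t) mg).
Qed.

Lemma W01 nT (a b : nT.-tuple R) : 0 <= W_WL a b.
Proof. by rewrite /W_WL; case: ifP. Qed.

End H.

Unset Implicit Arguments. Set Strict Implicit.

Theorem lemma5 (R : realType) (nC nT : nat) (v : 'I_nC -> R)
  (X Y : 'I_nT -> R) (deltaX : R)
  (FXhat : probability (alloc R nC nT) R) :
  (forall c, 0 < v c) -> \sum_(c < nC) v c = 1 ->
  (forall t, 0 < X t) -> (forall t, 0 <= Y t) ->
  0 <= deltaX <= 1 ->
  in_FF X FXhat ->
  (forall (c : 'I_nC) (u : 'I_nT -> R), (forall t, 0 <= u t) ->
     marginal FXhat c u =
     (1 - deltaX + deltaX *
        \big[Num.min/1]_(t < nT) Num.min (deltaX / (2 * v c * X t) * u t) 1)%:E) ->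
  forall FY : probability (alloc R nC nT) R, in_FF Y FY ->
  ((deltaX * (1 - deltaX / 2 * \sum_(t < nT) Y t / X t))%:E
     <= piX v FXhat FY)%E.
Proof.
move=> v0 vs X0 Y0 /andP[d0 d1] hFX hm FY [hFY1 hFY2].
pose f := fun z : alloc R nC nT * alloc R nC nT =>
  (\sum_(c < nC) v c * W_WL (tnth z.1 c) (tnth z.2 c))%:E.
have f0 : forall z, (0 <= f z)%E.
  move=> z; rewrite lee_fin; apply: sumr_ge0 => c _.
  by rewrite mulr_ge0 ?W01 ?ltW.
have mf : measurable_fun setT f.
  apply/measurable_EFinP; apply: measurable_sum => c.
  apply: measurable_funM; first exact: measurable_cst.
  exact: mW.
have [->|dpos] := eqVneq deltaX 0.
  by rewrite mul0r; apply: integral_ge0 => z _; exact: f0.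
have {dpos} dpos : 0 < deltaX by rewrite lt_neqAle eq_sym dpos.
rewrite /piX -/f (fubini_tonelli2 f mf f0).
set G := fubini_G FXhat f.
have mG : measurable_fun setT G := @measurable_fun_fubini_tonelli_G _ _ _ _ _ FXhat f mf f0.
have G0 : forall y, (0 <= G y)%E.
  by move=> y; apply: integral_ge0 => x _; exact: f0.
pose k t := deltaX * deltaX / 2 / X t.
have k0 : forall t, 0 <= k t.
  by move=> t; rewrite /k !divr_ge0 ?mulr_ge0 ?ltW.
pose s t (y : alloc R nC nT) := \sum_(c < nC) Num.max (xct y c t) 0.
have s0 : forall t y, 0 <= s t y.
  by move=> t y; apply: sumr_ge0 => c _; rewrite le_max lexx orbT.
have ms : forall t, measurable_fun setT (s t).
  move=> t; apply: measurable_sum => c; apply: measurable_maxr.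
    exact: mxct.
  exact: measurable_cst.
have point : forall y, (deltaX%:E <= G y + (\sum_(t < nT) k t * s t y)%:E)%E.
  move=> y.
  pose m c t := Num.max (xct y c t) 0.
  pose A c := [set x : alloc R nC nT | forall t, (m c t <= xct x c t)%R].
  have mA : forall c, measurable (A c).
    move=> c; apply: (@mset_forall _ _ _ _ (fun t _ => m c t) (fun t x => xct x c t)) => t.
      exact: measurable_cst.
    exact: mxct.
  have Ga : ((\sum_(c < nC) v c * (deltaX - deltaX * \sum_(t < nT) (deltaX / (2 * v c * X t) * m c t)))%:E <= G y)%E.
    apply: (@le_trans _ _ (\sum_(c < nC) ((v c)%:E * FXhat (A c)))%E).
      rewrite -sumEFin; apply: lee_sum => c _; rewrite EFinM.
      apply: lee_wpmul2l; first by rewrite lee_fin ltW.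
      apply: (core dpos d1 (v0 c) X0 (hm c) (u:=m c)).
      by move=> t; rewrite /m le_max lexx orbT.
    have -> : (\sum_(c < nC) ((v c)%:E * FXhat (A c)))%E =
        (\int[FXhat]_x (\sum_(c < nC) v c * \1_(A c) x)%:E)%E.
      under eq_integral do rewrite -sumEFin.
      rewrite ge0_integral_sum //; first last.
      - by move=> c x _; rewrite lee_fin indicE mulr_ge0 ?ler0n ?ltW.
      - move=> c; apply/measurable_EFinP; apply: measurable_funM.
          exact: measurable_cst.
        exact: measurable_indic.
      apply: eq_bigr => c _.
      under eq_integral do rewrite EFinM.
      rewrite ge0_integralZl //; first last.
      - by rewrite lee_fin ltW.
      - exact/measurable_EFinP/measurable_indic.
      by rewrite integral_indic // setIT.
    rewrite /G /fubini_G; apply: ge0_le_integral => //.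
    - by move=> x _; rewrite lee_fin; apply: sumr_ge0 => c _; rewrite indicE mulr_ge0 ?ler0n ?ltW.
    - apply/measurable_EFinP; apply: measurable_sum => c.
      apply: measurable_funM; first exact: measurable_cst.
      exact: measurable_indic.
    - apply/measurable_EFinP; apply: measurable_sum => c.
      apply: measurable_funM; first exact: measurable_cst.
      apply: (mW (g:=fun x => x) (h:=fun=> y) c); [exact: measurable_id | exact: measurable_cst].
    - move=> x _; rewrite lee_fin; apply: ler_sum => c _.
      apply: ler_wpM2l; first exact: ltW.
      rewrite indicE; case: (boolP (x \in A c)) => HA; last exact: W01.
      rewrite /W_WL; have -> // : [forall t, tnth (tnth y c) t <= tnth (tnth x c) t].
      apply/forallP => t; move: HA; rewrite inE => /(_ t) H.
      by apply: le_trans H; rewrite /m le_max lexx.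
  apply: le_trans (leeD2r _ Ga); rewrite -EFinD lee_fin le_eqVlt; apply/orP; left; apply/eqP.
  have e1 : forall c, v c * (deltaX - deltaX * \sum_(t < nT) (deltaX / (2 * v c * X t) * m c t))
      = v c * deltaX - \sum_(t < nT) k t * m c t.
    move=> c; rewrite mulrBr; congr (_ - _); rewrite !mulr_sumr; apply: eq_bigr => t _.
    rewrite /k; field.
    by rewrite ?mulf_neq0 ?gt_eqF ?X0 ?v0 ?andbT.
  rewrite (eq_bigr _ (fun c _ => e1 c)) sumrB -mulr_suml vs mul1r.
  rewrite exchange_big /=.
  have -> : \sum_(j < nT) \sum_(i < nC) k j * m i j = \sum_(t < nT) k t * s t y.
    by apply: eq_bigr => t _; rewrite /s mulr_sumr.
  by rewrite subrK.
have mK : measurable_fun setT (fun y => (\sum_(t < nT) k t * s t y)%:E).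
  apply/measurable_EFinP; apply: measurable_sum => t.
  by apply: measurable_funM => //; exact: measurable_cst.
have I1 : (deltaX%:E <= \int[FY]_y (G y + (\sum_(t < nT) k t * s t y)%:E))%E.
  have -> : deltaX%:E = (\int[FY]_y cst deltaX%:E y)%E.
    rewrite integral_cst // -[LHS]mule1; congr (_ * _)%E; apply/esym; exact: probability_setT.
  apply: (ge0_le_integral FY measurableT).
  - by move=> y _; rewrite /= lee_fin ltW.
  - exact: measurable_cst.
  - exact: emeasurable_funD.
  - by move=> y _; exact: point.
rewrite ge0_integralD // in I1; last first.
  by move=> y _; rewrite lee_fin; apply: sumr_ge0 => t _; rewrite mulr_ge0.
have I2 : (\int[FY]_y (\sum_(t < nT) k t * s t y)%:E
            <= (\sum_(t < nT) k t * Y t)%:E)%E.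
  under eq_integral do rewrite -sumEFin.
  rewrite ge0_integral_sum //; first last.
  - by move=> t y _; rewrite lee_fin mulr_ge0.
  - move=> t; apply/measurable_EFinP.
    by apply: measurable_funM => //; exact: measurable_cst.
  rewrite -sumEFin; apply: lee_sum => t _.
  under eq_integral do rewrite (EFinM (k t)).
  rewrite ge0_integralZl //; first last.
  - by rewrite lee_fin.
  - by move=> y _; rewrite lee_fin.
  - exact/measurable_EFinP.
  rewrite (EFinM (k t)); apply: lee_wpmul2l; first by rewrite lee_fin.
  have E : (\int[FY]_y (s t y)%:E = \int[FY]_y (\sum_(c < nC) xct y c t)%:E)%E.
    apply: ae_eq_integral => //.
    - exact/measurable_EFinP.
    - apply/measurable_EFinP; apply: measurable_sum => c; exact: mxct.
    - rewrite /ae_eq; move: hFY1; apply: filterS => y Hy _; congr EFin; apply: eq_bigr => c _.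
      by rewrite max_l.
  by rewrite E; exact: hFY2.
have : (deltaX%:E <= \int[FY]_y G y + (\sum_(t < nT) k t * Y t)%:E)%E.
  by apply: le_trans I1 _; exact: leeD2l.
rewrite -leeBlDr // -EFinB => H; apply: le_trans H; rewrite lee_fin.
have -> : \sum_(t < nT) k t * Y t = deltaX * (deltaX / 2 * \sum_(t < nT) Y t / X t).
  rewrite !mulr_sumr; apply: eq_bigr => t _; rewrite /k; field.
  by rewrite gt_eqF.
by rewrite mulrBr mulr1.
Qed.
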